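(* Let $N\ge1$, $\mathbf{h}_s,\mathbf{h}_0\in\mathbb{C}^N$, $\sigma>0$, $\epsilon>0$, $\bar P>0$, $P_t>0$, and let $\mathcal{B}=\{\mathbf{h}\in\mathbb{C}^N:\|\mathbf{h}-\mathbf{h}_0\|^2\le\epsilon\sigma^2\}$. Consider the mean feedback problem $$\mathbf{P3}:\ \max_{p\ge0,\ \|\mathbf{v}\|=1}\log\big(1+p\,\mathbf{h}_s^H\mathbf{v}\mathbf{v}^H\mathbf{h}_s\big)\ \text{ s.t. } p\le\bar P,\ \ p\,\mathbf{h}^H\mathbf{v}\mathbf{v}^H\mathbf{h}\le P_t\ \forall\mathbf{h}\in\mathcal{B},$$ and its two subproblems $\mathbf{SP1}$ (same objective, only the constraint $p\le\bar P$) and $\mathbf{SP2}$ (same objective, only the constraints $p\,\mathbf{h}^H\mathbf{v}\mathbf{v}^H\mathbf{h}\le P_t$ for all $\mathbf{h}\in\mathcal{B}$). Identify a feasible pair $(p,\mathbf{v})$ with $\mathbf{S}=p\mathbf{v}\mathbf{v}^H$. Let $\mathbf{S}_1$ be the optimal solution of $\mathbf{SP1}$ and $\mathbf{S}_2$ the optimal solution of $\mathbf{SP2}$. Then: (i) if $\mathbf{S}_1$ satisfies the constraint of $\mathbf{SP2}$, then $\mathbf{S}_1$ is the optimal solution of $\mathbf{P3}$; (ii) if $\mathbf{S}_2$ satisfies the constraint of $\mathbf{SP1}$, i.e. $\mathrm{tr}(\mathbf{S}_2)\le\bar P$, then $\mathbf{S}_2$ is the optimal solution of $\mathbf{P3}$;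 (iii) otherwise, the optimal solution $\mathbf{S}$ of $\mathbf{P3}$ satisfies both $\mathrm{tr}(\mathbf{S})=\bar P$ and $\mathbf{h}_{\mathrm{opt}}^H\mathbf{S}\mathbf{h}_{\mathrm{opt}}=P_t$, where $\mathbf{h}_{\mathrm{opt}}=\arg\max_{\mathbf{h}\in\mathcal{B}}\mathbf{h}^H\mathbf{S}\mathbf{h}$.
   Context: $\mathbf{P3}$ is the special case of the robust cognitive beamforming problem in which the channel-uncertainty covariance is $\sigma^2\mathbf{I}$ (mean feedback), so the uncertainty set is a Euclidean ball of radius $\sqrt{\epsilon}\sigma$ around $\mathbf{h}_0$. *)

(* Defs.v *)
From mathcomp Require Import all_boot all_algebra.
From mathcomp Require Import complex.
From mathcomp Require Import reals exp.
Import GRing.Theory Num.Theory.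
Set Implicit Arguments. Unset Strict Implicit. Unset Printing Implicit Defensive.
Local Open Scope ring_scope.
Local Open Scope complex_scope.

Section P3Defs.
Variables (R : realType) (N : nat).
Local Notation C := R[i].

Definition ctmx m n (A : 'M[C]_(m, n)) : 'M[C]_(n, m) := (map_mx conjc A)^T.

Definition vnorm2 (v : 'cV[C]_N) : C := \sum_i `|v i 0| ^+ 2.

Definition qform (h : 'cV[C]_N) (S : 'M[C]_N) : C := (ctmx h *m S *m h) 0 0.

Definition is_pvv (S : 'M[C]_N) (p : R) (v : 'cV[C]_N) : Prop :=
  0 <= p /\ vnorm2 v = 1 /\ S = p%:C *: (v *m ctmx v).

Definition in_ball (h0 : 'cV[C]_N) (eps sigma : R) (h : 'cV[C]_N) : Prop :=
  vnorm2 (h - h0) <= (eps * sigma ^+ 2)%:C.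

Definition interf_ok (h0 : 'cV[C]_N) (eps sigma Pt : R) (S : 'M[C]_N) : Prop :=
  forall h, in_ball h0 eps sigma h -> qform h S <= Pt%:C.

Definition feas_SP1 (Pbar : R) (S : 'M[C]_N) : Prop :=
  exists p v, is_pvv S p v /\ p <= Pbar.
Definition feas_SP2 (h0 : 'cV[C]_N) (eps sigma Pt : R) (S : 'M[C]_N) : Prop :=
  exists p v, is_pvv S p v /\ interf_ok h0 eps sigma Pt S.
Definition feas_P3 (h0 : 'cV[C]_N) (eps sigma Pbar Pt : R) (S : 'M[C]_N) : Prop :=
  exists p v, is_pvv S p v /\ p <= Pbar /\ interf_ok h0 eps sigma Pt S.

Definition objective (hs : 'cV[C]_N) (S : 'M[C]_N) : R :=
  ln (1 + complex.Re (qform hs S)).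

Definition optimal (feas : 'M[C]_N -> Prop) (hs : 'cV[C]_N) (S : 'M[C]_N) : Prop :=
  feas S /\ forall S', feas S' -> objective hs S' <= objective hs S.

Definition the_optimal (feas : 'M[C]_N -> Prop) (hs : 'cV[C]_N) (S : 'M[C]_N) : Prop :=
  optimal feas hs S /\ forall S', optimal feas hs S' -> S' = S.

End P3Defs.

(* Main.v *)
Require Import Defs.
From mathcomp Require Import all_boot all_algebra.
From mathcomp Require Import complex.
From mathcomp Require Import reals exp.
From mathcomp Require Import ring lra.
From mathcomp Require Import order.
Import Order.TTheory GRing.Theory Num.Theory.
Set Implicit Arguments. Unset Strict Implicit. Unset Printing Implicit Defensive.
Local Open Scope ring_scope.
Local Open Scope complex_scope.

Section H.
Variables (R : realType) (N : nat).
Local Notation C := R[i].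
Implicit Types (z w : C) (x y u h : 'cV[C]_N).

Lemma RCD (a b : R) : (a + b)%:C = a%:C + b%:C :> C.
Proof. by simpc. Qed.
Lemma RCM (a b : R) : (a * b)%:C = a%:C * b%:C :> C.
Proof. by simpc. Qed.
Lemma RCX (a : R) n : (a ^+ n)%:C = a%:C ^+ n :> C.
Proof. elim: n => [|n IH]; first by simpc. by rewrite !exprS RCM IH. Qed.
Lemma RCB (a b : R) : (a - b)%:C = a%:C - b%:C :> C.
Proof. by simpc. Qed.
Lemma RCN (a : R) : (- a)%:C = - a%:C :> C.
Proof. by simpc. Qed.
Lemma RC0 : (0:R)%:C = 0 :> C. Proof. by []. Qed.
Lemma RC1 : (1:R)%:C = 1 :> C. Proof. by []. Qed.
Lemma RCsum (I : finType) (F : I -> R) : (\sum_i F i)%:C = \sum_i (F i)%:C :> C.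
Proof. by apply: (big_morph (fun a : R => a%:C)); [exact: RCD|]. Qed.

Definition nrm z : R := Num.sqrt (complex.Re z ^+ 2 + complex.Im z ^+ 2).

Lemma normE z : `|z| = (nrm z)%:C.
Proof. by rewrite normc_def. Qed.

Lemma nrm_ge0 z : 0 <= nrm z.
Proof. exact: sqrtr_ge0. Qed.

Lemma nrmM z w : nrm (z * w) = nrm z * nrm w.
Proof. by apply: complexI; rewrite RCM -!normE normrM. Qed.

Lemma nrmD z w : nrm (z + w) <= nrm z + nrm w.
Proof. by have := ler_normD z w; rewrite !normE -RCD lecR. Qed.

Lemma nrm2E z : (nrm z ^+ 2)%:C = z * z^*.
Proof. by rewrite RCX -normE sqr_normc. Qed.

Lemma nrmJ z : nrm (z^*) = nrm z.
Proof. by apply: complexI; rewrite -!normE normcJ. Qed.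

Lemma nrmR (a : R) : nrm a%:C = `|a|.
Proof. by rewrite /nrm /= expr0n /= addr0 sqrtr_sqr. Qed.

Lemma nrm_eq0 z : (nrm z == 0) = (z == 0).
Proof. by rewrite -(inj_eq (@complexI _)) -normE normr_eq0. Qed.


Lemma leCR (a b : R) : (a%:C <= b%:C :> C) = (a <= b).
Proof. exact: lecR. Qed.
Lemma ltCR (a b : R) : (a%:C < b%:C :> C) = (a < b).
Proof. exact: ltcR. Qed.

Lemma nrm_sum (I : finType) (F : I -> C) : nrm (\sum_i F i) <= \sum_i nrm (F i).
Proof.
rewrite -leCR RCsum [X in _ <= X](eq_bigr (fun i => `|F i|)); last by move=> i _; rewrite normE.
by rewrite -normE; exact: ler_norm_sum.
Qed.


Lemma real_CS (I : finType) (a b : I -> R) :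
  (\sum_i a i * b i) ^+ 2 <= (\sum_i a i ^+ 2) * (\sum_i b i ^+ 2).
Proof.
set A := \sum_i a i ^+ 2; set B := \sum_i b i ^+ 2; set P := \sum_i a i * b i.
have A0 : 0 <= A by apply: sumr_ge0 => i _; exact: sqr_ge0.
have key : 0 <= \sum_i (P * a i - A * b i) ^+ 2 by apply: sumr_ge0 => i _; exact: sqr_ge0.
have E : \sum_i (P * a i - A * b i) ^+ 2 = A * (A * B - P ^+ 2).
  rewrite (eq_bigr (fun i => P ^+ 2 * a i ^+ 2 - (2 * P * A) * (a i * b i) + A ^+ 2 * b i ^+ 2));
    last by move=> i _; ring.
  rewrite big_split /= sumrB -!mulr_sumr -/A -/B -/P; ring.
rewrite E in key.
have [Az|Ap] := eqVneq A 0.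
  have ha : forall i, a i = 0.
    move=> i; apply/eqP; rewrite -sqrf_eq0; apply/eqP.
    by apply: (psumr_eq0P (P:=xpredT) (F:=fun i => a i ^+ 2)) => // j _; exact: sqr_ge0.
  rewrite /P big1 ?expr0n ?mulr_ge0 // ?sumr_ge0 // => i _; rewrite ?sqr_ge0 // ha mul0r //.
have Ap' : 0 < A by rewrite lt0r Ap A0.
by rewrite -subr_ge0; rewrite pmulr_rge0 in key.
Qed.

Definition dot x y : C := \sum_i (x i 0)^* * y i 0.
Definition rn2 x : R := \sum_i nrm (x i 0) ^+ 2.
Definition rn x : R := Num.sqrt (rn2 x).

Lemma rn2_ge0 x : 0 <= rn2 x.
Proof. by apply: sumr_ge0 => i _; exact: sqr_ge0. Qed.
Lemma rn_ge0 x : 0 <= rn x.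
Proof. exact: sqrtr_ge0. Qed.
Lemma rn_sqr x : rn x ^+ 2 = rn2 x.
Proof. by rewrite sqr_sqrtr // rn2_ge0. Qed.

Lemma vnorm2E x : vnorm2 x = (rn2 x)%:C.
Proof. by rewrite /vnorm2 /rn2 RCsum; apply: eq_bigr => i _; rewrite normE RCX. Qed.

Lemma dotE x y : (ctmx x *m y) 0 0 = dot x y.
Proof. by rewrite !mxE; apply: eq_bigr => i _; rewrite !mxE. Qed.

Lemma dotC x y : dot y x = (dot x y)^*.
Proof.
rewrite /dot rmorph_sum; apply: eq_bigr => i _.
by case: (x i 0) => a b; case: (y i 0) => c d; simpc; apply/eqP; rewrite eq_complex /=; apply/andP; split; apply/eqP; ring.
Qed.

Lemma dotxx x : dot x x = (rn2 x)%:C.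
Proof.
rewrite /dot /rn2 RCsum; apply: eq_bigr => i _; by rewrite nrm2E mulrC.
Qed.

Lemma dotDr x y y' : dot x (y + y') = dot x y + dot x y'.
Proof. by rewrite /dot -big_split; apply: eq_bigr => i _; rewrite mxE mulrDr. Qed.
Lemma dotZr x c y : dot x (c *: y) = c * dot x y.
Proof. by rewrite /dot mulr_sumr; apply: eq_bigr => i _; rewrite mxE mulrCA. Qed.
Lemma dotDl x x' y : dot (x + x') y = dot x y + dot x' y.
Proof. by rewrite /dot -big_split; apply: eq_bigr => i _; rewrite mxE rmorphD mulrDl. Qed.
Lemma dotZl c x y : dot (c *: x) y = c^* * dot x y.
Proof. by rewrite /dot mulr_sumr; apply: eq_bigr => i _; rewrite mxE rmorphM mulrA. Qed.
Lemma dotNl x y : dot (- x) y = - dot x y.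
Proof. by rewrite /dot -sumrN; apply: eq_bigr => i _; rewrite mxE rmorphN mulNr. Qed.

Lemma qformE h u : qform h (u *m ctmx u) = (nrm (dot h u) ^+ 2)%:C.
Proof.
rewrite /qform mulmxA -mulmxA mxE big_ord1 dotE.
have -> : (ctmx u *m h) 0 0 = (dot h u)^* by rewrite dotE dotC.
by rewrite nrm2E.
Qed.

Lemma trE u : \tr (u *m ctmx u) = (rn2 u)%:C.
Proof.
rewrite /mxtrace /rn2 RCsum; apply: eq_bigr => i _.
by rewrite mxE big_ord1 !mxE nrm2E.
Qed.

Lemma rn2Z c x : rn2 (c *: x) = nrm c ^+ 2 * rn2 x.
Proof. by rewrite /rn2 mulr_sumr; apply: eq_bigr => i _; rewrite mxE nrmM exprMn. Qed.

Lemma CS x y : nrm (dot x y) <= rn x * rn y.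
Proof.
rewrite /dot; apply: (le_trans (nrm_sum _)).
rewrite (eq_bigr (fun i => nrm (x i 0) * nrm (y i 0))); last by move=> i _; rewrite nrmM nrmJ.
rewrite /rn -sqrtrM ?rn2_ge0 //.
rewrite -(ger0_norm (sumr_ge0 _ _)) -?sqrtr_sqr; last by move=> i _; rewrite mulr_ge0 ?nrm_ge0.
by rewrite ler_sqrt ?mulr_ge0 ?rn2_ge0 // real_CS.
Qed.


Definition outer u : 'M[C]_N := u *m ctmx u.

Lemma ctmxZ c (v : 'cV[C]_N) : ctmx (c *: v) = conjc c *: ctmx v.
Proof. by apply/matrixP => i j; rewrite !mxE rmorphM. Qed.

Lemma outerZ c u : outer (c *: u) = (c * conjc c) *: outer u.
Proof. by rewrite /outer ctmxZ -scalemxAl -scalemxAr scalerA. Qed.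

Lemma conjR (a : R) : conjc (a%:C) = a%:C :> C.
Proof. exact: conjc_real. Qed.

Lemma conjM z w : conjc (z * w) = conjc z * conjc w.
Proof. exact: rmorphM. Qed.
Lemma conjK z : conjc (conjc z) = z.
Proof. exact: conjcK. Qed.

Lemma nrm_ge0' z : 0 <= nrm z. Proof. exact: nrm_ge0. Qed.

Lemma pvv_u S p v : is_pvv S p v ->
  S = outer ((Num.sqrt p)%:C *: v) /\ rn2 ((Num.sqrt p)%:C *: v) = p.
Proof.
case=> p0 [v1 ->]; have rv : rn2 v = 1.
  by apply: (@complexI R); rewrite -vnorm2E v1.
split; last by rewrite rn2Z rv mulr1 nrmR ger0_norm ?sqrtr_ge0 // sqr_sqrtr.
by rewrite outerZ conjR -RCM -expr2 sqr_sqrtr.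
Qed.

Lemma u_pvv u : 0 < rn2 u ->
  is_pvv (outer u) (rn2 u) ((rn u)^-1%:C *: u).
Proof.
move=> up; have rp : 0 < rn u by rewrite sqrtr_gt0.
split; first exact: ltW.
split.
  rewrite vnorm2E rn2Z nrmR ger0_norm ?invr_ge0 ?rn_ge0 // -rn_sqr -exprMn mulVf ?expr1n //.
  by rewrite gt_eqF.
rewrite -[_ *m ctmx _]/(outer _) outerZ conjR -RCM scalerA -RCM -rn_sqr -expr2 -exprMn mulfV ?expr1n ?scale1r //.
by rewrite gt_eqF.
Qed.

Lemma objE hs u : objective hs (outer u) = ln (1 + nrm (dot hs u) ^+ 2).
Proof. by rewrite /objective /outer qformE. Qed.

Lemma obj_le hs u (w : 'cV[C]_N) :
  (objective hs (outer u) <= objective hs (outer w)) = (nrm (dot hs u) <= nrm (dot hs w)).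
Proof.
rewrite !objE ler_ln ?posrE ?ltr_wpDr ?sqr_ge0 // lerD2l.
by rewrite ler_sqr ?nnegrE ?nrm_ge0.
Qed.

Lemma obj_lt hs u (w : 'cV[C]_N) :
  (objective hs (outer u) < objective hs (outer w)) = (nrm (dot hs u) < nrm (dot hs w)).
Proof.
have P z : 0 < 1 + nrm z ^+ 2 by rewrite ltr_wpDr ?sqr_ge0.
by rewrite !objE ltr_ln ?posrE ?P // ltrD2l ltr_sqr ?nnegrE ?nrm_ge0.
Qed.

Lemma interfE h0 eps sigma Pt u :
  interf_ok h0 eps sigma Pt (outer u) <->
  (forall h, rn2 (h - h0) <= eps * sigma ^+ 2 -> nrm (dot h u) ^+ 2 <= Pt).
Proof.
split => H h hb.
  by rewrite -leCR -qformE; apply: H; rewrite /in_ball vnorm2E leCR.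
by rewrite /outer qformE leCR; apply: H; rewrite -leCR -vnorm2E.
Qed.

Lemma rnZ c x : rn (c *: x) = nrm c * rn x.
Proof. by rewrite /rn rn2Z sqrtrM ?sqr_ge0 // sqrtr_sqr ger0_norm ?nrm_ge0. Qed.

Lemma Re_le_nrm z : complex.Re z <= nrm z.
Proof.
have := normc_ge_Re z; rewrite normE leCR => H.
exact: le_trans (ler_norm _) H.
Qed.

Lemma rn2D x y : rn2 (x + y) = rn2 x + rn2 y + 2 * complex.Re (dot x y).
Proof.
apply: (@complexI R); rewrite -dotxx !RCD RCM -!dotxx dotDl !dotDr (dotC y x).
have -> : (2 : R)%:C = 2%:R :> C.
  by apply/eqP; rewrite eq_complex /= addr0 !eqxx.
rewrite -addcJ conjcK. ring.
Qed.

Lemma rnD x y : rn (x + y) <= rn x + rn y.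
Proof.
rewrite /rn -(ger0_norm (addr_ge0 (rn_ge0 x) (rn_ge0 y))) -sqrtr_sqr ler_sqrt ?sqr_ge0 //.
rewrite rn2D sqrrD !rn_sqr mulr2n; have := le_trans (Re_le_nrm (dot x y)) (CS x y); lra.
Qed.


Definition phase z : C := if z == 0 then 1 else z / (nrm z)%:C.

Lemma nrm0 : nrm 0 = 0.
Proof. by apply/eqP; rewrite nrm_eq0. Qed.

Lemma phaseE z : z = phase z * (nrm z)%:C.
Proof.
rewrite /phase; case: eqP => [->|/eqP z0]; first by rewrite nrm0 mulr0.
rewrite divfK //; apply/eqP => /complexI /eqP; by rewrite nrm_eq0 (negPf z0).
Qed.

Lemma nrm_phase z : nrm (phase z) = 1.
Proof.
rewrite /phase; case: eqP => [_|/eqP z0]; first by rewrite nrmR normr1.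
have nz : nrm z != 0 by rewrite nrm_eq0.
have := congr1 nrm (phaseE z); rewrite nrmM nrmR ger0_norm ?nrm_ge0 // /phase (negPf z0).
by move/(congr1 (fun a => a / nrm z)); rewrite mulfK // divff // => <-.
Qed.

Lemma phaseJ z : phase z * conjc (phase z) = 1.
Proof. by rewrite -nrm2E nrm_phase expr1n. Qed.

Lemma mix hs u (w : 'cV[C]_N) (t : R) : 0 <= t <= 1 -> exists z : 'cV[C]_N,
  nrm (dot hs z) = (1 - t) * nrm (dot hs u) + t * nrm (dot hs w) /\
  (forall h, nrm (dot h z) <= (1 - t) * nrm (dot h u) + t * nrm (dot h w)) /\
  rn z <= (1 - t) * rn u + t * rn w.
Proof.
case/andP => t0 t1.
set a := dot hs u; set b := dot hs w.
set zeta := phase a * conjc (phase b).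
have nz : nrm zeta = 1 by rewrite nrmM nrmJ !nrm_phase mulr1.
exists ((1 - t)%:C *: u + (t%:C * zeta) *: w).
have t1' : 0 <= 1 - t by rewrite subr_ge0.
split.
  rewrite dotDr !dotZr -/a -/b.
  have -> : (1 - t)%:C * a + t%:C * zeta * b =
            phase a * ((1 - t) * nrm a + t * nrm b)%:C.
    rewrite {1}(phaseE a) {1}(phaseE b) /zeta !RCD !RCN !RCM.
    have E := phaseJ b.
    rewrite [t%:C * _ * _](_ : _ = t%:C * phase a * (nrm b)%:C * (phase b * conjc (phase b))); last by ring.
    rewrite E; ring.
  by rewrite nrmM nrm_phase mul1r nrmR ger0_norm // addr_ge0 // mulr_ge0 ?nrm_ge0.
split.
  move=> h; rewrite dotDr !dotZr; apply: (le_trans (nrmD _ _)).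
  by rewrite !nrmM ?nz ?nrmJ ?nrm_phase ?mulr1 !nrmR !ger0_norm.
apply: (le_trans (rnD _ _)); rewrite !rnZ !nrmM ?nz ?nrmJ ?nrm_phase ?mulr1 !nrmR !ger0_norm //.
Qed.

Lemma ball_bound h0 h u rho : 0 <= rho -> rn2 (h - h0) <= rho ^+ 2 ->
  nrm (dot h u) <= nrm (dot h0 u) + rho * rn u.
Proof.
move=> r0 hb.
have -> : h = (h - h0) + h0 by rewrite addrNK.
rewrite dotDl addrC; apply: (le_trans (nrmD _ _)); rewrite lerD2l.
apply: (le_trans (CS _ _)); apply: ler_wpM2r; first exact: rn_ge0.
by rewrite /rn -(ger0_norm r0) -sqrtr_sqr ler_sqrt ?sqr_ge0.
Qed.

Lemma hopt_ex h0 u rho : 0 <= rho -> 0 < rn2 u -> exists h,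
  rn2 (h - h0) = rho ^+ 2 /\ nrm (dot h u) = nrm (dot h0 u) + rho * rn u.
Proof.
move=> r0 up; have rp : 0 < rn u by rewrite sqrtr_gt0.
set a := dot h0 u; set c := conjc (phase a) * (rho / rn u)%:C.
exists (h0 + c *: u).
have -> : h0 + c *: u - h0 = c *: u by rewrite addrC addKr.
split.
  rewrite rn2Z nrmM nrmJ nrm_phase mul1r nrmR ger0_norm ?divr_ge0 ?rn_ge0 //.
  by rewrite -rn_sqr -exprMn divfK // gt_eqF.
rewrite dotDl dotZl dotxx -/a.
have -> : a + conjc c * (rn2 u)%:C = phase a * (nrm a + rho * rn u)%:C.
  rewrite /c conjM conjK conjR {1}(phaseE a) -rn_sqr RCD !RCM.
  have E : ((rn u)^-1)%:C * (rn u)%:C = 1 :> C by rewrite -RCM mulVf ?gt_eqF.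
  rewrite [X in _ + X](_ : _ = phase a * rho%:C * (rn u)%:C * (((rn u)^-1)%:C * (rn u)%:C)); last by ring.
  rewrite E; ring.
by rewrite nrmM nrm_phase mul1r nrmR ger0_norm // addr_ge0 ?mulr_ge0 ?nrm_ge0 ?rn_ge0.
Qed.

End H.

Lemma pick_t (R : realType) (m s k : R) : 0 <= m -> m < s -> 0 <= k ->
  exists t, 0 < t /\ t <= 1 /\ (1 - t) * m + t * k <= s.
Proof.
move=> m0 ms k0.
have ks : 0 < k + s by lra.
exists ((s - m) / (k + s)).
have E : (s - m) / (k + s) * (k + s) = s - m by rewrite divfK // gt_eqF.
have tp : 0 < (s - m) / (k + s) by rewrite divr_gt0 // subr_gt0.
split => //; split.
  by rewrite ler_pdivrMr // mul1r; lra.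
set t := (s - m) / (k + s) in E tp *.
nra.
Qed.

Lemma conv_le (R : realType) (t x y s : R) : 0 <= t -> t <= 1 -> x <= s -> y <= s ->
  (1 - t) * x + t * y <= s.
Proof. move=> *; nra. Qed.

Lemma sq_le_sqrt (R : realType) (x P : R) : 0 <= x -> x ^+ 2 <= P -> x <= Num.sqrt P.
Proof.
move=> x0 h; rewrite -(ger0_norm x0) -sqrtr_sqr ler_sqrt //.
exact: le_trans (sqr_ge0 _) h.
Qed.

Lemma le_sqrt_sq (R : realType) (x P : R) : 0 <= x -> 0 <= P -> x <= Num.sqrt P -> x ^+ 2 <= P.
Proof.
move=> x0 P0 h; rewrite -(sqr_sqrtr P0) ler_sqr ?nnegrE ?sqrtr_ge0 //.
Qed.

Lemma restrict_opt (R : realType) (N : nat) (F G : 'M[R[i]]_N -> Prop) hs S :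
  (forall S, F S -> G S) -> the_optimal G hs S -> F S -> the_optimal F hs S.
Proof.
move=> FG [[GS optS] uniqS] FS; split; first by split => // S' /FG; exact: optS.
move=> S' [FS' optS']; apply: uniqS; split; first exact: FG.
move=> S'' GS''; apply: le_trans (optS _ GS'') _; exact: optS'.
Qed.

Lemma sq_lt_sqrt (R : realType) (x P : R) : 0 <= x -> x ^+ 2 < P -> x < Num.sqrt P.
Proof.
move=> x0 h; have P0 : 0 < P by exact: le_lt_trans (sqr_ge0 _) h.
by rewrite -(ger0_norm x0) -sqrtr_sqr ltr_sqrt.
Qed.

Theorem lemma5 (R : realType) (N : nat) (hN : (1 <= N)%N)
    (hs h0 : 'cV[R[i]]_N) (sigma eps Pbar Pt : R)
    (hsigma : 0 < sigma) (heps : 0 < eps) (hPbar : 0 < Pbar) (hPt : 0 < Pt)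
    (S1 S2 : 'M[R[i]]_N)
    (hS1 : the_optimal (feas_SP1 Pbar) hs S1)
    (hS2 : the_optimal (feas_SP2 h0 eps sigma Pt) hs S2) :
  (* (i) *)
  (interf_ok h0 eps sigma Pt S1 ->
     the_optimal (feas_P3 h0 eps sigma Pbar Pt) hs S1) /\
  (* (ii) *)
  (\tr S2 <= Pbar%:C ->
     the_optimal (feas_P3 h0 eps sigma Pbar Pt) hs S2) /\
  (* (iii) *)
  (~ interf_ok h0 eps sigma Pt S1 -> ~ (\tr S2 <= Pbar%:C) ->
     forall S, optimal (feas_P3 h0 eps sigma Pbar Pt) hs S ->
       \tr S = Pbar%:C /\
       exists hopt, in_ball h0 eps sigma hopt /\
         (forall h, in_ball h0 eps sigma h -> qform h S <= qform hopt S) /\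
         qform hopt S = Pt%:C).
Proof.
set rho := Num.sqrt (eps * sigma ^+ 2).
have rho0 : 0 <= rho by exact: sqrtr_ge0.
have es0 : 0 <= eps * sigma ^+ 2 by rewrite mulr_ge0 ?sqr_ge0 ?ltW.
have rho2 : rho ^+ 2 = eps * sigma ^+ 2 by rewrite sqr_sqrtr.
have ballE h : in_ball h0 eps sigma h = (rn2 (h - h0) <= rho ^+ 2).
  by rewrite /in_ball vnorm2E leCR rho2.
have interfU u : interf_ok h0 eps sigma Pt (outer u) <->
    (forall h, rn2 (h - h0) <= rho ^+ 2 -> nrm (dot h u) ^+ 2 <= Pt).
  by rewrite rho2; exact: interfE.
split.
  move=> I; apply: (restrict_opt _ hS1).
    by move=> S [p [v [pv [pb _]]]]; exists p, v.
  by case: hS1 => [[[p [v [pv pb]]] _] _]; exists p, v.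
split.
  move=> T; apply: (restrict_opt _ hS2).
    by move=> S [p [v [pv [_ io]]]]; exists p, v.
  case: hS2 => [[[p [v [pv io]]] _] _]; exists p, v; split => //; split => //.
  have [E rp] := pvv_u pv; move: T; by rewrite E trE rp leCR.
move=> nI nT S [[p [v [pv [pb io]]]] optS].
have [ES rpu] := pvv_u pv.
move: ((Num.sqrt p)%:C *: v) ES rpu => u ES rpu; subst S.
case: (hS1) => [[[p1 [v1 [pv1 pb1]]] opt1] uniq1].
have [E1 r1] := pvv_u pv1; move: ((Num.sqrt p1)%:C *: v1) E1 r1 => u1 E1 r1.
case: (hS2) => [[[p2 [v2 [pv2 io2]]] opt2] uniq2].
have [E2 r2] := pvv_u pv2; move: ((Num.sqrt p2)%:C *: v2) E2 r2 => u2 E2 r2.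
have improve z : rn2 z <= Pbar -> interf_ok h0 eps sigma Pt (outer z) ->
    nrm (dot hs u) < nrm (dot hs z) -> False.
  move=> zb zi zlt.
  have zp : 0 < rn2 z.
    rewrite lt0r rn2_ge0 andbT; apply/eqP => z0.
    have := CS hs z; rewrite /rn z0 sqrtr0 mulr0.
    have := nrm_ge0 (dot hs u); lra.
  have F : feas_P3 h0 eps sigma Pbar Pt (outer z).
    by exists (rn2 z), ((rn z)^-1%:C *: z); split; [exact: u_pvv | split].
  have := optS _ F; rewrite obj_le => H.
  by have := lt_le_trans zlt H; rewrite ltxx.
have lt2 : nrm (dot hs u) < nrm (dot hs u2).
  rewrite ltNge; apply/negP => le2.
  have E : outer u = S2.
    apply: uniq2; split; first by exists p, v; split.
    by move=> S' F'; apply: le_trans (opt2 _ F') _; rewrite E2 obj_le.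
  by apply: nT; rewrite -E trE rpu leCR.
have lt1 : nrm (dot hs u) < nrm (dot hs u1).
  rewrite ltNge; apply/negP => le1.
  have E : outer u = S1.
    apply: uniq1; split; first by exists p, v; split.
    by move=> S' F'; apply: le_trans (opt1 _ F') _; rewrite E1 obj_le.
  by apply: nI; rewrite -E.
have io' := proj1 (interfU u) io.
rewrite E2 in io2; have io2' := proj1 (interfU u2) io2.
have sP0 : 0 <= Num.sqrt Pbar by exact: sqrtr_ge0.
have trP : rn2 u = Pbar.
  apply/eqP; rewrite eq_le rpu pb /= leNgt; apply/negP => lt.
  have ru_lt : rn u < Num.sqrt Pbar by rewrite /rn ltr_sqrt // rpu.
  have [t [t0 [t1 tle]]] := pick_t (rn_ge0 u) ru_lt (rn_ge0 u2).
  have [z [zhs [zh zrn]]] := mix hs u u2 (t:=t) (ltac:(rewrite (ltW t0) t1 //)).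
  apply: (improve z).
  - rewrite -rn_sqr; apply: le_sqrt_sq (rn_ge0 z) (ltW hPbar) (le_trans zrn tle).
  - apply/interfU => h hb.
    apply: le_sqrt_sq; [exact: nrm_ge0 | exact: ltW | ].
    apply: (le_trans (zh h)); apply: conv_le => //; first exact: ltW.
      by apply: sq_le_sqrt; [exact: nrm_ge0 | exact: io'].
    by apply: sq_le_sqrt; [exact: nrm_ge0 | exact: io2'].
  - rewrite zhs; have H : 0 < t * (nrm (dot hs u2) - nrm (dot hs u)) by rewrite mulr_gt0 // subr_gt0.
    lra.
split; first by rewrite trE trP.
have up : 0 < rn2 u by rewrite trP.
have [ho [hob hov]] := hopt_ex h0 rho0 up.
exists ho; split; first by rewrite ballE hob.
have M0 : 0 <= nrm (dot h0 u) + rho * rn u by rewrite addr_ge0 ?mulr_ge0 ?nrm_ge0 ?rn_ge0.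
split.
  move=> h hb; rewrite !qformE leCR hov ler_sqr ?nnegrE ?nrm_ge0 //.
  by apply: ball_bound => //; rewrite -ballE.
rewrite qformE hov; congr (_%:C); apply/eqP; rewrite eq_le.
have Mle := io' ho (ltac:(by rewrite hob)); rewrite hov in Mle.
rewrite Mle /= leNgt; apply/negP => Mlt.
have Mlt' := sq_lt_sqrt M0 Mlt.
have K0 : 0 <= nrm (dot h0 u1) + rho * rn u1 by rewrite addr_ge0 ?mulr_ge0 ?nrm_ge0 ?rn_ge0.
have [t [t0 [t1 tle]]] := pick_t M0 Mlt' K0.
have [z [zhs [zh zrn]]] := mix hs u u1 (t:=t) (ltac:(rewrite (ltW t0) t1 //)).
apply: (improve z).
- rewrite -rn_sqr; apply: le_sqrt_sq (rn_ge0 z) (ltW hPbar) (le_trans zrn _).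
  apply: conv_le => //; first exact: ltW.
    by apply: sq_le_sqrt; [exact: rn_ge0 | rewrite rn_sqr trP].
  by apply: sq_le_sqrt; [exact: rn_ge0 | rewrite rn_sqr r1].
- apply/interfU => h hb.
  apply: le_sqrt_sq; [exact: nrm_ge0 | exact: ltW | ].
  apply: (le_trans (zh h)); apply: le_trans tle.
  have B := ball_bound u rho0 hb.
  have B1 := ball_bound u1 rho0 hb.
  have := nrm_ge0 (dot h u); have := nrm_ge0 (dot h u1).
  move: B B1; set x := nrm (dot h u); set y := nrm (dot h u1).
  move: (nrm (dot h0 u) + rho * rn u) (nrm (dot h0 u1) + rho * rn u1) => M K.
  move=> *; nra.
- rewrite zhs; have H : 0 < t * (nrm (dot hs u1) - nrm (dot hs u)) by rewrite mulr_gt0 // subr_gt0.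
  lra.
Qed.
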